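(* Let $\alpha^1,\dots,\alpha^p,\beta^1,\dots,\beta^p$ be smooth functions of $(t,x)$ such that $\sum_{s=1}^p(\alpha^s_i\beta^s_j-\alpha^s_j\beta^s_i)=0$ for all $0\le i<j\le p$, where subscripts denote orders of $x$-derivatives. Then $W(\alpha^1,\dots,\alpha^p,\beta^{s'})=0$ for every $s'\in\{1,\dots,p\}$.
   Context: The Wronskian with respect to $x$ of functions $\varphi^1,\dots,\varphi^l$ of $(t,x)$ is $W(\varphi^1,\dots,\varphi^l)=\det\bigl(\partial_x^{i}\varphi^j\bigr)_{i=0,\dots,l-1;\ j=1,\dots,l}$. *)

(* Defs.v *)
From HB Require Import structures.
From mathcomp Require Import all_boot all_order all_algebra.
From mathcomp Require Import all_classical all_reals all_analysis.
Set Implicit Arguments. Unset Strict Implicit. Unset Printing Implicit Defensive.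
Import Order.TTheory GRing.Theory Num.Theory.
Local Open Scope ring_scope.

Definition dx {R : realType} (n : nat) (f : R -> R -> R) (t x : R) : R :=
  derive1n n (f t) x.

Definition smooth_x {R : realType} (f : R -> R -> R) : Prop :=
  forall (t : R) (n : nat) (x : R), derivable (derive1n n (f t)) x 1.

Definition wronskian {R : realType} (l : nat) (phi : 'I_l -> R -> R -> R)
  (t x : R) : R :=
  \det (\matrix_(i < l, j < l) dx i (phi j) t x).

Definition append_fun {R : realType} (p : nat) (alpha : 'I_p -> R -> R -> R)
  (b : R -> R -> R) : 'I_(p + 1) -> R -> R -> R :=
  fun j => match fintype.split j with inl k => alpha k | inr _ => b end.

(* Main.v *)
Require Import Defs.
From HB Require Import structures.
From mathcomp Require Import all_boot all_order all_algebra.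
From mathcomp Require Import all_classical all_reals all_analysis.
Import Order.TTheory GRing.Theory Num.Theory.
Local Open Scope ring_scope.

Lemma nz_tr (F : fieldType) n (w : 'cV[F]_n) (c : 'M[F]_1) : c != 0 -> (col_mx w c)^T != 0.
Proof.
move=> hc; apply/eqP => /(congr1 trmx); rewrite trmxK trmx0 => /eqP.
by rewrite col_mx_eq0 (negbTE hc) andbF.
Qed.

Lemma key (F : fieldType) (n : nat) (A B : 'M[F]_(n+1, n)) (k : 'I_n) :
  A *m B^T = B *m A^T -> \det (row_mx A (col k B)) = 0.
Proof.
move=> sym.
have [v v0 vA] : exists2 v : 'rV_(n+1), v != 0 & v *m A = 0.
  have: \det (row_mx A (0:'M[F]_(n+1,1))) == 0.
    rewrite -det_tr; apply/det0P; exists (col_mx (0:'M[F]_(n,1)) (1:'M[F]_1))^T.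
      by apply: nz_tr; rewrite oner_eq0.
    by rewrite -trmx_mul mul_row_col mulmx0 mul0mx addr0 trmx0.
  case/det0P => v v0 hv; exists v => //.
  by move: hv; rewrite mul_mx_row => /eqP; rewrite row_mx_eq0 => /andP[/eqP -> _].
case: (boolP (\det (row_mx A (col k B)) == 0)) => [/eqP//|hdet].
have vB: v *m B = 0.
  have h: A *m (v *m B)^T = 0.
    by rewrite trmx_mul mulmxA sym -mulmxA -trmx_mul vA trmx0 mulmx0.
  apply/eqP; apply/negPn/negP => hne; move/negP: hdet; apply; rewrite -det_tr.
  apply/det0P; exists (col_mx (v *m B)^T (0:'M[F]_(1,1)))^T.
    apply/eqP => /(congr1 trmx); rewrite trmxK trmx0 => /eqP.
    rewrite col_mx_eq0 eqxx andbT => /eqP /(congr1 trmx); rewrite trmxK trmx0.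
    by move/eqP; rewrite (negbTE hne).
  by rewrite -trmx_mul mul_row_col h mulmx0 addr0 trmx0.
exfalso; move/negP: hdet; apply; apply/det0P; exists v => //.
have vc : v *m col k B = 0.
  apply/matrixP => i j; rewrite [RHS]mxE; transitivity ((v *m B) i k); last by rewrite vB mxE.
  by rewrite !mxE; apply: eq_bigr => l _; rewrite !mxE.
by rewrite mul_mx_row vc vA row_mx0.
Qed.

Theorem lemma7 (R : realType) (p : nat) (alpha beta : 'I_p -> R -> R -> R) :
  (forall s, smooth_x (alpha s)) ->
  (forall s, smooth_x (beta s)) ->
  (forall (i j : 'I_p.+1), (i < j)%N -> forall t x : R,
     \sum_(s < p) (dx i (alpha s) t x * dx j (beta s) t x
                   - dx j (alpha s) t x * dx i (beta s) t x) = 0) ->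
  forall (s' : 'I_p) (t x : R), wronskian (append_fun alpha (beta s')) t x = 0.
Proof.
move=> _ _ H s' t x.
have Hn : forall i j : nat, (i < p.+1)%N -> (j < p.+1)%N ->
   \sum_(s < p) (dx i (alpha s) t x * dx j (beta s) t x
                   - dx j (alpha s) t x * dx i (beta s) t x) = 0.
  move=> i j hi hj; case: (ltngtP i j) => hij.
  - exact: (H (Ordinal hi) (Ordinal hj) hij).
  - have := H (Ordinal hj) (Ordinal hi) hij t x => /= h.
    transitivity (- \sum_(s < p) (dx j (alpha s) t x * dx i (beta s) t x
                   - dx i (alpha s) t x * dx j (beta s) t x)); last by rewrite h oppr0.
    by rewrite -sumrN; apply: eq_bigr => s _; rewrite opprB.
  - by rewrite hij; apply: big1 => s _; rewrite subrr.
pose A := \matrix_(i < p + 1, s < p) dx i (alpha s) t x.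
pose B := \matrix_(i < p + 1, s < p) dx i (beta s) t x.
have -> : wronskian (append_fun alpha (beta s')) t x = \det (row_mx A (col s' B)).
  rewrite /wronskian; congr (\det _); apply/matrixP => i j.
  rewrite !mxE /append_fun; by case: (fintype.split j) => a; rewrite !mxE.
apply: (@key _ p A B s'); apply/matrixP => i j; rewrite !mxE.
have hi : (i < p.+1)%N by apply: (leq_trans (ltn_ord i)); rewrite addn1.
have hj : (j < p.+1)%N by apply: (leq_trans (ltn_ord j)); rewrite addn1.
apply/eqP; rewrite -subr_eq0 -sumrB; apply/eqP.
transitivity (\sum_(s < p) (dx i (alpha s) t x * dx j (beta s) t x
                   - dx j (alpha s) t x * dx i (beta s) t x)); last exact: (Hn _ _ hi hj).
apply: eq_bigr => s _. rewrite /A /B !mxE.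
by rewrite [dx i (beta s) t x * _]mulrC.
Qed.
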